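(* Let $\mathcal{F}$ be a projective Fraïssé family of finite trees whose distinguished epimorphisms are monotone and weakly coherent, and which allows splitting edges. Let $(F_i)_{i<\omega}$ be a Fraïssé sequence for $\mathcal{F}$ and $\mathbb{F}=\varprojlim F_i\subseteq\prod_i F_i$ its projective Fraïssé limit. Let $e=(e_n)_{n\in\mathbb{N}}\in\mathbb{F}$. If there is $N$ such that $e_m$ is an endpoint of $F_m$ for every $m\ge N$, then $e$ is an endpoint of $\mathbb{F}$.
   Context: Graphs have reflexive symmetric edge relations; topological graphs carry a compact, Hausdorff, zero-dimensional, second countable topology with closed edge set; finite graphs are discrete. An epimorphism $g\colon B\to A$ is a continuous surjection with $\langle a_1,a_2\rangle\in E(A)$ iff some $b_i\in g^{-1}(a_i)$ satisfy $\langle b_1,b_2\rangle\in E(B)$. A topological graph is disconnected if its vertex set splits into two nonempty disjoint closed sets with no edges between, connected otherwise (subsets carry induced edges and subspace topology). Monotone: every fibre is connected. An arc is a connected topological graph such that removing any vertex except at most two (its endpoints) disconnects it. An embedding is an injective continuous map that is a homeomorphism onto its image and preserves and reflects edges. A vertex $x$ of a topological graph $G$ is an endpoint of $G$ if whenever $H$ is an arc and $f\colon H\to G$ an embedding with $x$ in the image, $x$ is the image of an endpoint of $H$ (for a finite tree these are the vertices with at most one neighbour). In a finite tree, $\mathrm{ord}(a)$ is the number of neighbours other than $a$. For monotone $f\colon B\to A$ of finite trees, $a\in A$ with $\mathrm{ord}(a)=n\ge3$ is a point of weak coherence if some $b\in f^{-1}(a)$ with $\mathrm{ord}(b)=m\ge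 n$ and an injection $p\colon n\to m$ satisfy $f^{-1}(A_i)\subseteq B_{p(i)}$ ($A_i$, $B_j$ the components of $A\setminus\{a\}$, $B\setminus\{b\}$); $f$ is weakly coherent if this holds at every vertex of order $\ge3$. A projective Fraïssé family: class of finite graphs with distinguished epimorphisms, countably many up to isomorphism, containing identities, closed under composition, with joint projection and projective amalgamation. A Fraïssé sequence: compatible distinguished epimorphisms $f^m_n\colon F_m\to F_n$ such that each member is the image of some $F_n$, and every distinguished $f\colon A\to F_m$ satisfies $f\circ g=f^n_m$ for some $n\ge m$ and distinguished $g\colon F_n\to A$; the limit is the inverse limit with coordinatewise edges. Allowing splitting edges: for each member $G$ and nontrivial edge $\{a,b\}$, replacing it by a path $a,\ast,b$ with a new vertex yields a member, and the two maps collapsing $\ast$ to $a$, resp. $b$, are distinguished. *)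

(* Defs.v *)
From HB Require Import structures.
From mathcomp Require Import all_boot all_order all_algebra.
From mathcomp Require Import all_classical all_reals.
From mathcomp Require Import topology.
Set Implicit Arguments. Unset Strict Implicit. Unset Printing Implicit Defensive.
Record FinGraph := {
  gV :> finType;
  gE : rel gV;
  gE_refl : reflexive gE;
  gE_sym : symmetric gE }.

Definition giso (A B : FinGraph) : Prop :=
  exists g : A -> B, bijective g /\ forall x y, gE (g x) (g y) = gE x y.

(* epimorphism g : B -> A (continuity is automatic for discrete graphs) *)
Definition gepi (A B : FinGraph) (g : B -> A) : Prop :=
  (forall a, exists b, g b = a) /\
  (forall a1 a2, gE a1 a2 <-> exists b1 b2, [/\ g b1 = a1, g b2 = a2 & gE b1 b2]).

Definition gconnected (G : FinGraph) (S : {set G}) : Prop :=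
  forall X Y : {set G}, X :|: Y = S -> [disjoint X & Y] -> X != finset.set0 -> Y != finset.set0 ->
    exists x y, [/\ x \in X, y \in Y & gE x y].

Definition is_tree (G : FinGraph) : Prop :=
  [/\ 0 < #|G|, gconnected [set: G] &
      ~ exists s : seq G, [/\ uniq s, 3 <= size s & cycle (gE (f:=G)) s]].

Definition gord (G : FinGraph) (a : G) : nat := #|[set b | gE a b & b != a]|.

Definition comps (G : FinGraph) (a : G) : {set {set G}} :=
  [set [set y | connect (fun u v => [&& u != a, v != a & gE u v]) x y] | x in [set~ a]].

Definition gmonotone (A B : FinGraph) (g : B -> A) : Prop :=
  forall a, gconnected [set b | g b == a].

Definition point_weak_coherence (A B : FinGraph) (g : B -> A) (a : A) : Prop :=
  exists b : B, [/\ g b = a, gord a <= gord b &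
    exists p : {set A} -> {set B}, {in comps a &, injective p} /\
      forall C, C \in comps a -> p C \in comps b /\ g @^-1: C \subset p C].

Definition weakly_coherent (A B : FinGraph) (g : B -> A) : Prop :=
  forall a : A, 3 <= gord a -> point_weak_coherence g a.

Definition dist_t := forall A B : FinGraph, (B -> A) -> Prop.

Definition proj_fraisse_family (member : FinGraph -> Prop) (dist : dist_t) : Prop :=
  (forall A B g, dist A B g -> [/\ member A, member B & gepi g]) /\
  [/\ (exists en : nat -> FinGraph, forall A, member A -> exists n, giso (en n) A),
      (forall A, member A -> dist A A id),
      (forall (A B C : FinGraph) (g : B -> A) (h : C -> B), dist A B g -> dist B C h ->
          dist A C (g \o h)),
      (forall A B, member A -> member B ->
          exists (C : FinGraph) (g : C -> A) (h : C -> B), dist A C g /\ dist B C h) &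
      (forall (A B C : FinGraph) (g : B -> A) (h : C -> A), dist A B g -> dist A C h ->
          exists (D : FinGraph) (g' : D -> B) (h' : D -> C),
            [/\ dist B D g', dist C D h' & g \o g' =1 h \o h'])].

(* Splitting the edge {a,b}: new vertex None, path a - None - b. *)
Definition split_rel (G : FinGraph) (a b : G) : rel (option G) :=
  fun u v => match u, v with
  | Some x, Some y =>
      (x == y) || (gE x y && ~~ (((x == a) && (y == b)) || ((x == b) && (y == a))))
  | None, None => true
  | None, Some y => (y == a) || (y == b)
  | Some y, None => (y == a) || (y == b)
  end.

Lemma split_rel_refl (G : FinGraph) (a b : G) : reflexive (split_rel a b).
Proof. by case=> [x|] //=; rewrite eqxx. Qed.

Lemma split_rel_sym (G : FinGraph) (a b : G) : symmetric (split_rel a b).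
Proof.
case=> [x|] [y|] //=; rewrite (eq_sym x y) gE_sym.
by case: (x == a); case: (y == b); case: (x == b); case: (y == a).
Qed.

Definition split_graph (G : FinGraph) (a b : G) : FinGraph :=
  {| gV := option G; gE := split_rel a b;
     gE_refl := @split_rel_refl G a b; gE_sym := @split_rel_sym G a b |}.

Definition allows_splitting (member : FinGraph -> Prop) (dist : dist_t) : Prop :=
  forall (G : FinGraph) (a b : G), member G -> a != b -> gE a b ->
    [/\ member (split_graph a b),
        dist G (split_graph a b) (fun o => odflt a o) &
        dist G (split_graph a b) (fun o => odflt b o)].

(* f^{k+m}_m is the composite [bond f m k].                                    *)
Fixpoint bond (F : nat -> FinGraph) (f : forall n, F n.+1 -> F n) (m k : nat)
  : F (k + m) -> F m :=
  match k return F (k + m) -> F m with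
  | 0 => fun x => x
  | k'.+1 => fun x => @bond F f m k' (f (k' + m) x)
  end.

Definition fraisse_sequence (member : FinGraph -> Prop) (dist : dist_t)
  (F : nat -> FinGraph) (f : forall n, F n.+1 -> F n) : Prop :=
  [/\ (forall n, dist (F n) (F n.+1) (f n)),
      (forall A, member A -> exists n (g : F n -> A), dist A (F n) g) &
      (forall (A : FinGraph) m (h : A -> F m), dist (F m) A h ->
          exists k (g : F (k + m) -> A), dist A (F (k + m)) g /\ h \o g =1 @bond F f m k)].

Local Open Scope classical_set_scope.
Definition top_graph (T : topologicalType) (E : T -> T -> Prop) : Prop :=
  [/\ (forall x, E x x) /\ (forall x y, E x y -> E y x),
      compact [set: T] /\ hausdorff_space T,
      zero_dimensional T, @second_countable T & closed [set p : T * T | E p.1 p.2]].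

(* A subset S (induced edges, subspace topology) is connected. *)
Definition tconnected (T : topologicalType) (E : T -> T -> Prop) (S : set T) : Prop :=
  ~ exists A B : set T,
      [/\ A `|` B = S, A `&` B = set0, A !=set0 & B !=set0] /\
      [/\ (exists C, closed C /\ A = S `&` C),
          (exists C, closed C /\ B = S `&` C) &
          (forall x y, A x -> B y -> ~ E x y)].

Definition is_arc (T : topologicalType) (E : T -> T -> Prop) : Prop :=
  [/\ top_graph E, tconnected E setT &
      exists p q : T, forall v, v <> p -> v <> q -> ~ tconnected E (~` [set v])].

Definition arc_endpoint (T : topologicalType) (E : T -> T -> Prop) (p : T) : Prop :=
  tconnected E (~` [set p]).

Definition tembedding (T U : topologicalType) (ET : T -> T -> Prop)
  (EU : U -> U -> Prop) (g : T -> U) : Prop :=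
  [/\ injective g, continuous g,
      (forall A : set T, open A -> exists V : set U, open V /\ g @` A = g @` setT `&` V) &
      (forall x y, EU (g x) (g y) <-> ET x y)].

Definition tg_endpoint (G : topologicalType) (E : G -> G -> Prop) (x : G) : Prop :=
  forall (H : topologicalType) (EH : H -> H -> Prop) (g : H -> G),
    is_arc EH -> tembedding EH E g -> (exists h, g h = x) ->
    exists h, arc_endpoint EH h /\ g h = x.

Definition dgraph (G : FinGraph) : topologicalType := discrete_topology (gV G).
Definition dedge (G : FinGraph) : dgraph G -> dgraph G -> Prop := fun x y => gE (f:=G) x y.

Definition lim_prod (F : nat -> FinGraph) : topologicalType :=
  prod_topology (fun n => dgraph (F n)).

Definition lim_set (F : nat -> FinGraph) (f : forall n, F n.+1 -> F n) : set (lim_prod F) :=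
  [set x | forall n, f n (x n.+1) = x n].

Definition flimit (F : nat -> FinGraph) (f : forall n, F n.+1 -> F n) : topologicalType :=
  set_type (lim_set f).

Definition lim_edge (F : nat -> FinGraph) (f : forall n, F n.+1 -> F n)
  : flimit f -> flimit f -> Prop :=
  fun x y => forall n, gE (f:=F n) (set_val x n) (set_val y n).

(* Main.v *)
Require Import Defs.
From HB Require Import structures.
From mathcomp Require Import all_boot all_order all_algebra.
From mathcomp Require Import all_classical all_reals.
From mathcomp Require Import topology.
Set Implicit Arguments. Unset Strict Implicit. Unset Printing Implicit Defensive.

Section Fin.
Variable G : FinGraph.

Definition rin (P : {set G}) : rel G := fun u v => [&& u \in P, v \in P & gE u v].

Lemma gconn_connect (P : {set G}) p1 p2 : gconnected P -> p1 \in P -> p2 \in P ->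
  connect (rin P) p1 p2.
Proof.
move=> HP h1 h2; apply: contrapT => Hn.
pose X := [set y in P | connect (rin P) p1 y].
have := HP X (P :\: X).
have XP : X \subset P by apply/fintype.subsetP => y; rewrite inE => /andP[].
case.
- apply/setP => y; rewrite /X !inE; by case: (y \in P); case: connect.
- rewrite -setI_eq0; apply/eqP/setP => y; rewrite /X !inE; by case: (y \in P); case: connect.
- by apply/set0Pn; exists p1; rewrite inE h1 connect0.
- by apply/set0Pn; exists p2; rewrite !inE h2 andbT; apply/negP => /andP[_ /Hn].
move=> x [y [xX]]; rewrite !inE => /andP[yX yP] Exy.
move: xX; rewrite inE => /andP[xP cx].
move: yX; rewrite yP /= => /negP; apply.
by apply: connect_trans cx (connect1 _); rewrite /rin xP yP.
Qed.

Lemma path_rin_all (P : {set G}) x s : path (rin P) x s -> all (mem P) s.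
Proof.
elim: s x => //= y s IH x /andP[/and3P[_ yP _] /IH]; by rewrite yP.
Qed.

Lemma path_rin_gE (P : {set G}) x s : path (rin P) x s -> path (gE (f:=G)) x s.
Proof. by apply: sub_path => u v /and3P[]. Qed.

Lemma tree_unique_edge (P Q : {set G}) p1 p2 q1 q2 :
  ~ (exists s : seq G, [/\ uniq s, 3 <= size s & cycle (gE (f:=G)) s]) ->
  gconnected P -> gconnected Q -> [disjoint P & Q] ->
  p1 \in P -> p2 \in P -> q1 \in Q -> q2 \in Q -> gE p1 q1 -> gE p2 q2 -> p1 = p2.
Proof.
move=> Hnc HP HQ dPQ p1P p2P q1Q q2Q E1 E2; apply: contrapT => neq.
have /connectP [s Hs Hl] := gconn_connect HP p1P p2P.
have /connectP [t Ht Htl] := gconn_connect HQ q2Q q1Q.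
case/shortenP: Hs Hl => s' Hs' Hus' _ Hl.
case/shortenP: Ht Htl => t' Ht' Hut' _ Htl.
apply: Hnc; exists ((p1 :: s') ++ (q2 :: t')); split.
- rewrite cat_uniq Hus' Hut' andbT; apply/hasPn => y.
  have Pall : all (mem P) (p1 :: s') by rewrite /= p1P (path_rin_all Hs').
  have Qall : all (mem Q) (q2 :: t') by rewrite /= q2Q (path_rin_all Ht').
  move=> yt; apply/negP => ys.
  have yP : y \in P by move/allP: Pall => /(_ y ys).
  have yQ : y \in Q by move/allP: Qall => /(_ y yt).
  by move/disjointFr: dPQ => /(_ y yP); rewrite yQ.
- rewrite size_cat /= addnS ltnS; case: s' Hs' Hus' Hl => [|z s'] //=.
  by move=> _ _ Hl; rewrite Hl in neq.
- rewrite /= rcons_cat rcons_cons cat_path (path_rin_gE Hs') /= -Hl E2 /=.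
  by rewrite rcons_path (path_rin_gE Ht') /= -Htl gE_sym.
Qed.

Lemma level_eq (A : FinGraph) (bd : G -> A) (u w : A) (p1 p2 q1 q2 : G) :
  ~ (exists s : seq G, [/\ uniq s, 3 <= size s & cycle (gE (f:=G)) s]) ->
  gmonotone bd -> u != w -> bd p1 = u -> bd p2 = u -> bd q1 = w -> bd q2 = w ->
  gE p1 q1 -> gE p2 q2 -> p1 = p2.
Proof.
move=> Hnc Hm uw h1 h2 h3 h4 E1 E2.
apply: (tree_unique_edge Hnc (Hm u) (Hm w) _ _ _ _ _ E1 E2); rewrite ?inE ?h1 ?h2 ?h3 ?h4 //.
rewrite -setI_eq0; apply/eqP/setP => p; rewrite !inE.
by apply/negP => /andP[/eqP -> /eqP hw]; move: uw; rewrite hw eqxx.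
Qed.
End Fin.
Local Open Scope classical_set_scope.

Lemma dgraph_top (G : FinGraph) : top_graph (@dedge G).
Proof.
split.
- by split => [x|x y]; rewrite /dedge ?gE_refl // gE_sym.
- split; [apply: finite_compact; exact: (@finite_finset (gV G) setT) | exact: discrete_hausdorff].
- exact: discrete_zero_dimension.
- exists (range (fun x : dgraph G => [set x])).
    apply: card_le_trans (card_image_le _ _) _.
    exact: finite_set_countable (@finite_finset (gV G) setT).
  split; first by move=> _ [x _ <-]; exact: discrete_open.
  move=> x A /nbhs_singleton Ax.
  exists [set x]; first by split => //; exists x.
  by move=> y /= ->.
- rewrite -openC openE => p np.
  rewrite /interior /=.
  exists ([set p.1], [set p.2]); first by split; exact: discrete_set1.
  by case=> a b [/= -> ->]; case: p np.
Qed.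

Definition P3rel : rel 'I_3 := fun i j => (i <= j.+1)%N && (j <= i.+1)%N.
Lemma P3refl : reflexive P3rel. Proof. by move=> i; rewrite /P3rel !leqnSn. Qed.
Lemma P3sym : symmetric P3rel. Proof. by move=> i j; rewrite /P3rel andbC. Qed.
Definition P3 : FinGraph := {| gV := 'I_3; gE := P3rel; gE_refl := P3refl; gE_sym := P3sym |}.
Definition i0 : P3 := @Ordinal 3 0 isT.
Definition i1 : P3 := @Ordinal 3 1 isT.
Definition i2 : P3 := @Ordinal 3 2 isT.

Lemma eq_i1 (i : P3) : i = i1 <-> val i = 1%N.
Proof. by split => [->//|h]; apply: val_inj. Qed.

Lemma P3_sep : ~ tconnected (@dedge P3) (~` [set i1]).
Proof.
apply => /=.
exists [set i : dgraph P3 | val i = 0%N], [set i : dgraph P3 | val i = 2%N]; split; first split.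
- apply/seteqP; split => i /=.
  + by case=> h /eq_i1 h'; rewrite h' in h.
  + by move/eq_i1; case: i => [[|[|[|k]]] Hk] //= _; [left|right].
- by apply/seteqP; split => [i [/= -> ]|i].
- by exists i0.
- by exists i2.
split.
- exists [set i : dgraph P3 | val i = 0%N]; split; first exact: discrete_closed.
  apply/seteqP; split => i /=; last by case.
  by move=> h; split => //; move/eq_i1 => h'; rewrite h' in h.
- exists [set i : dgraph P3 | val i = 2%N]; split; first exact: discrete_closed.
  apply/seteqP; split => i /=; last by case.
  by move=> h; split => //; move/eq_i1 => h'; rewrite h' in h.
- by case=> [[|[|[|?]]] ?] [[|[|[|?]]] ?] //= _ _; rewrite /dedge /= /P3rel.
Qed.

Lemma P3_conn : tconnected (@dedge P3) setT.
Proof.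
move=> [A [B [[AB _ [a Aa] [b Bb]] [_ _ noE]]]].
have adj (i : P3) : gE i1 i by case: i => [[|[|[|?]]] ?].
have : (A `|` B) i1 by rewrite AB.
case=> [Ai1|Bi1].
- by apply: (noE i1 b Ai1 Bb); apply: adj.
- by apply: (noE a i1 Aa Bi1); rewrite /dedge gE_sym; apply: adj.
Qed.

Lemma P3_arc : is_arc (@dedge P3).
Proof.
split; first exact: dgraph_top.
- exact: P3_conn.
exists i0, i2 => v h0 h2.
suff -> : v = i1 by exact: P3_sep.
apply/eq_i1; case: v h0 h2 => [[|[|[|?]]] ?] //= h0 h2.
- by exfalso; apply: h0; apply: val_inj.
- by exfalso; apply: h2; apply: val_inj.
Qed.

Lemma endpoint_nbr (G : FinGraph) (x u v : G) :
  ~ (exists s : seq G, [/\ uniq s, (3 <= size s)%N & cycle (gE (f:=G)) s]) ->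
  tg_endpoint (@dedge G) x -> gE x u -> gE x v -> u != x -> v != x -> u = v.
Proof.
move=> Hnc Hend Eu Ev ux vx; apply: contrapT => uv.
have nEuv : ~~ gE u v.
  apply/negP => Euv; apply: Hnc; exists [:: u; x; v]; split => //.
  + rewrite /= !inE negb_or (negbTE ux) (eq_sym x v) vx /= andbT; apply/eqP => h; exact: uv h.
  + by rewrite /= (gE_sym u x) Eu Ev gE_sym Euv.
pose g := fun i : dgraph P3 => (match val i with 0 => u | 1 => x | _ => v end : dgraph G).
have [] := Hend (dgraph P3) (@dedge P3) g P3_arc.
- split.
  + move/eqP: (ux) => ux'; move/eqP: (vx) => vx'.
    move=> [[|[|[|?]]] ?] [[|[|[|?]]] ?] //= h; try (by apply: val_inj);
    exfalso; rewrite /g /= in h.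
    all: try by [apply: ux' | apply: vx' | apply: uv].
    all: try by [apply: ux'; rewrite h | apply: vx'; rewrite h | apply: uv; rewrite h].
  + by apply/continuousP => A _; exact: discrete_open.
  + move=> A _; exists (g @` A); split; first exact: discrete_open.
    apply/seteqP; split => y; first by move=> [a Aa <-]; split => //; exists a.
    by case.
  + move=> [[|[|[|?]]] ?] [[|[|[|?]]] ?] //; rewrite /dedge /g /= /P3rel /=;
    by rewrite ?gE_refl ?(gE_sym u x) ?(gE_sym v x) ?(gE_sym v u) ?Eu ?Ev ?(negbTE nEuv).
- by exists i1.
move=> [[|[|[|?]]] Hi] [Hh /=] //; rewrite /g /=.
- by move=> h; move: ux; rewrite h eqxx.
- move=> _; apply: P3_sep.
  have e1 : Ordinal Hi = i1 by apply: val_inj.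
  by rewrite e1 in Hh.
- by move=> h; move: vx; rewrite h eqxx.
Qed.
Section Lim.
Variables (F : nat -> FinGraph) (f : forall n, F n.+1 -> F n).

Lemma coord_f (x : flimit f) n : @f n (set_val x n.+1) = set_val x n.
Proof. exact: (set_valP x n). Qed.

Lemma coord_bond (x : flimit f) m k : @bond F f m k (set_val x (k + m)) = set_val x m.
Proof. by elim: k => [//|k IH] /=; rewrite coord_f. Qed.

Lemma lim_ext (x y : flimit f) : (forall n, set_val x n = set_val y n) -> x = y.
Proof.
move=> h; apply: val_inj.
exact: (functional_extensionality_dep h).
Qed.

Lemma coord_down (x y : flimit f) n : set_val x n = set_val y n ->
  forall k, (k <= n)%N -> set_val x k = set_val y k.
Proof.
elim: n => [h k|n IH h k]; first by rewrite leqn0 => /eqP ->.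
rewrite leq_eqVlt => /orP[/eqP -> //|]; rewrite ltnS; apply: IH.
by rewrite -coord_f h coord_f.
Qed.

Lemma coord_cont n : continuous (fun x : flimit f => (set_val x n : dgraph (F n))).
Proof.
move=> x.
apply: (@continuous_comp (flimit f) (lim_prod F) (dgraph (F n)) set_val (fun p => p n)).
  exact: initial_continuous.
exact: proj_continuous.
Qed.
End Lim.

Theorem mainTheorem13
  (member : FinGraph -> Prop) (dist : dist_t)
  (Hfam : proj_fraisse_family member dist)
  (Htree : forall A, member A -> is_tree A)
  (Hdist : forall (A B : FinGraph) (g : B -> A), dist A B g ->
             gmonotone g /\ weakly_coherent g)
  (Hsplit : allows_splitting member dist)
  (F : nat -> FinGraph) (f : forall n, F n.+1 -> F n)
  (Hseq : @fraisse_sequence member dist F f)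
  (e : flimit f)
  (N : nat)
  (HN : forall m, (N <= m)%N -> tg_endpoint (@dedge (F m)) (set_val e m)) :
  tg_endpoint (@lim_edge F f) e.
Proof.
case: Hfam => Hdm [_ Hid Hcomp _ _].
case: Hseq => Hfn _ _.
have memF n : member (F n) by case: (Hdm _ _ _ (Hfn n)).
have bond_dist m j : dist (F m) (F (j + m)) (@bond F f m j).
  elim: j => [|j IH]; first exact: (Hid _ (memF m)).
  exact: (Hcomp _ _ _ _ _ IH (Hfn (j + m))).
have bond_mono m j : gmonotone (@bond F f m j) by case: (Hdist _ _ _ (bond_dist m j)).
have notree n : ~ (exists s : seq (F n), [/\ uniq s, (3 <= size s)%N & cycle (gE (f:=F n)) s]).
  by case: (Htree _ (memF n)).
move=> H EH g [[[_ EHsym] _ _ _ _] Hconn _] [ginj gcont _ gedge] [h0 gh0].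
exists h0; split => //.
move=> [A [B [[AB AB0 [a Aa] [b Bb]] [[CA [cCA AE]] [CB [cCB BE]] noE]]]].
have notA (A' B' : set H) : A' `|` B' = ~` [set h0] -> ~ A' h0.
  move=> AB' Ah; have hh : (A' `|` B') h0 by left.
  by move: hh; rewrite AB' => /(_ erefl).
have Ah0 := notA _ _ AB.
have Bh0 : ~ B h0 by apply: (notA B A); rewrite setUC.
have neq_coord (h : H) : h <> h0 -> exists n, set_val (g h) n <> set_val e n.
  move=> hh; apply: contrapT => Hn; apply: hh; apply: ginj; rewrite gh0.
  apply: lim_ext => n; apply: contrapT => hn; apply: Hn; by exists n.
have [na Hna] : exists n, set_val (g a) n <> set_val e n.
  by apply: neq_coord => ha; apply: Ah0; rewrite -ha.
have [nb Hnb] : exists n, set_val (g b) n <> set_val e n.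
  by apply: neq_coord => hb; apply: Bh0; rewrite -hb.
pose m := (N + na + nb)%N.
have up (x y : flimit f) n : (n <= m)%N -> set_val x n <> set_val y n -> set_val x m <> set_val y m.
  by move=> nm hn hm; apply: hn; apply: coord_down hm _ nm.
have Wa : set_val (g a) m <> set_val e m by apply: up Hna; rewrite /m -addnA addnCA leq_addr.
have Wb : set_val (g b) m <> set_val e m by apply: up Hnb; rewrite /m leq_addl.
pose W := [set h : H | set_val (g h) m = set_val e m].
have cW : continuous (fun h : H => (set_val (g h) m : dgraph (F m))).
  move=> h; apply: (@continuous_comp H (flimit f) (dgraph (F m)) g (fun x => (set_val x m : dgraph (F m)))).
    exact: gcont.
  exact: coord_cont.
have oW : open W.
  by apply: (@open_comp H (dgraph (F m)) _ [set set_val e m]) => [h _|]; [exact: cW|exact: discrete_open].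
have clW : closed W.
  by apply: (@preimage_closed H (dgraph (F m)) _ [set set_val e m]) => [h _|]; [exact: cW|exact: discrete_closed].
have Wh0 : W h0 by rewrite /W /= gh0.
have exit (A' B' CA' CB' : set H) a' : A' `|` B' = ~` [set h0] -> A' `&` B' = set0 ->
    A' = ~` [set h0] `&` CA' -> B' = ~` [set h0] `&` CB' -> closed CA' -> closed CB' ->
    (forall x y, A' x -> B' y -> ~ EH x y) -> A' a' -> ~ W a' ->
    exists x z, [/\ A' x, ~ W x, W z & EH x z].
  move=> AB' AB0' AE' BE' cA cB noE' Aa' nWa.
  have AE1 h : A' h <-> (h <> h0 /\ CA' h) by rewrite AE'.
  have BE1 h : B' h <-> (h <> h0 /\ CB' h) by rewrite BE'.
  have ABh h : h <> h0 -> A' h \/ B' h.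
    move=> hh; have hab : (A' `|` B') h.
      by rewrite AB' /=; exact: hh.
    exact: hab.
  have nAB h : A' h -> B' h -> False.
    move=> ha hb; have hab : (A' `&` B') h by [].
    by move: hab; rewrite AB0'.
  apply: contrapT => Hno; apply: Hconn.
  exists (A' `&` ~` W), (~` (A' `&` ~` W)); split; first split.
  - by rewrite setUv.
  - by rewrite setICr.
  - by exists a'.
  - by exists h0 => -[] /(notA _ _ AB').
  split.
  - exists (CA' `&` ~` W); split; first by apply: closedI cA _; rewrite closedC.
    apply/seteqP; split => h /=.
    + by move=> [/AE1 [hh ch] nw]; split => //; split.
    + move=> [_ [ch nw]]; split => //; apply/AE1; split => // hh.
      by apply: nw; rewrite hh.
  - exists (W `|` CB'); split; first exact: closedU.
    apply/seteqP; split => h /=.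
    + move=> nX; split => //.
      have [Wh|nWh] := pselect (W h); first by left.
      have hh : h <> h0 by move=> hh; apply: nWh; rewrite hh.
      case: (ABh h hh) => [Ah|Bh]; first by exfalso; apply: nX.
      by right; case/BE1: Bh.
    + move=> [_ [Wh|ch]] [Ah nWh]; first exact: nWh.
      have hh : h <> h0 by move=> hh; apply: nWh; rewrite hh.
      by apply: (nAB h Ah); apply/BE1.
  - move=> x y [Ax nWx] nXy Exy.
    have [Wy|nWy] := pselect (W y); first by apply: Hno; exists x, y.
    have hy : y <> h0 by move=> hy; apply: nWy; rewrite hy.
    case: (ABh y hy) => [Ay|By]; first by apply: nXy.
    exact: noE' x y Ax By Exy.
have [x [z [Ax nWx Wz Exz]]] := exit A B CA CB a AB AB0 AE BE cCA cCB noE Aa Wa.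
have [y [z' [By nWy Wz' Eyz']]] : exists x z, [/\ B x, ~ W x, W z & EH x z].
  apply: (exit B A CB CA b) => //; first by rewrite setUC.
  - by rewrite setIC.
  - by move=> u v Bu Av Euv; apply: (noE v u Av Bu); apply: EHsym.
have lx := (gedge x z).2 Exz.
have ly := (gedge y z').2 Eyz'.
have uxy : set_val (g x) m = set_val (g y) m.
  apply: (endpoint_nbr (notree m) (HN m _)).
  - by rewrite /m -addnA leq_addr.
  - by rewrite gE_sym -Wz; apply: lx.
  - by rewrite gE_sym -Wz'; apply: ly.
  - by apply/eqP.
  - by apply/eqP.
have all_j j : set_val (g x) (j + m) = set_val (g y) (j + m).
  apply: (@level_eq (F (j + m)) (F m) (@bond F f m j) (set_val (g x) m) (set_val e m)
    (set_val (g x) (j + m)) (set_val (g y) (j + m)) (set_val (g z) (j + m)) (set_val (g z') (j + m))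
    (notree _) (bond_mono m j) _ _ _ _ _ (lx _) (ly _)).
  - by apply/eqP.
  - exact: coord_bond.
  - by rewrite coord_bond uxy.
  - by rewrite coord_bond Wz.
  - by rewrite coord_bond Wz'.
have gxy : g x = g y.
  by apply: lim_ext => n; apply: (coord_down (all_j n)); rewrite leq_addr.
have xy := ginj _ _ gxy.
have hab : (A `&` B) x by split => //; rewrite xy.
by move: hab; rewrite AB0.
Qed.
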